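(* Let $A\in\mathbb{R}^{m\times N}$ and $K\subseteq[N]=\{1,\dots,N\}$. Then the following are equivalent: (i) every vector $x_0\in\mathbb{R}^N_+$ with $\operatorname{supp}x_0\subseteq K$ is the unique solution of $(P_+)$ with $b=Ax_0$; (ii) $\mathbb{1}_K$ is the unique solution of $(P_+)$ with $b=A\mathbb{1}_K$.
   Context: For $b\in\mathbb{R}^m$, $(P_+)$ denotes the convex program $\min \|x\|_1$ subject to $Ax=b$ and $x\in\mathbb{R}_+^N$ (all entries nonnegative). ''Unique solution'' means unique minimizer. $\mathbb{1}_K\in\mathbb{R}^N$ denotes the vector with entries $1$ on $K$ and $0$ on $[N]\setminus K$. *)

(* Defs.v *)
From mathcomp Require Import all_boot all_order all_algebra.
From mathcomp Require Import reals.
Set Implicit Arguments. Unset Strict Implicit. Unset Printing Implicit Defensive.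
Import Order.TTheory GRing.Theory Num.Theory.
Local Open Scope ring_scope.

Definition l1norm (R : realType) (N : nat) (x : 'cV[R]_N) : R :=
  \sum_(i < N) `|x i 0|.

Definition nonneg_vec (R : realType) (N : nat) (x : 'cV[R]_N) : Prop :=
  forall i, 0 <= x i 0.

Definition supp (R : realType) (N : nat) (x : 'cV[R]_N) : {set 'I_N} :=
  [set i | x i 0 != 0].

Definition feasible_Pplus (R : realType) (m N : nat) (A : 'M[R]_(m, N))
  (b : 'cV[R]_m) (x : 'cV[R]_N) : Prop :=
  A *m x = b /\ nonneg_vec x.

Definition unique_sol_Pplus (R : realType) (m N : nat) (A : 'M[R]_(m, N))
  (b : 'cV[R]_m) (x : 'cV[R]_N) : Prop :=
  feasible_Pplus A b x /\
  (forall z, feasible_Pplus A b z -> l1norm x <= l1norm z) /\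
  (forall z, feasible_Pplus A b z -> l1norm z <= l1norm x -> z = x).

Definition indic (R : realType) (N : nat) (K : {set 'I_N}) : 'cV[R]_N :=
  \col_(i < N) (if i \in K then 1 else 0).

(* Main.v *)
Require Import Defs.
From mathcomp Require Import all_boot all_order all_algebra.
From mathcomp Require Import reals.
From mathcomp Require Import lra.
Import Order.TTheory GRing.Theory Num.Theory.
Local Open Scope ring_scope.

Lemma l1_nonneg (R : realType) N (x : 'cV[R]_N) :
  nonneg_vec x -> l1norm x = \sum_i x i 0.
Proof. by move=> h; apply: eq_bigr => i _; exact: ger0_norm. Qed.

Lemma indic_nonneg (R : realType) N (K : {set 'I_N}) : nonneg_vec (indic R K).
Proof. by move=> i; rewrite mxE; case: ifP. Qed.

Theorem proposition1p1 (R : realType) (m N : nat) (A : 'M[R]_(m, N))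
  (K : {set 'I_N}) :
  (forall x0 : 'cV[R]_N, nonneg_vec x0 -> supp x0 \subset K ->
     unique_sol_Pplus A (A *m x0) x0)
  <->
  unique_sol_Pplus A (A *m indic R K) (indic R K).
Proof.
split.
  move=> H; apply: H; first exact: indic_nonneg.
  by apply/subsetP => i; rewrite in_set mxE; case: ifP => // _; rewrite eqxx.
move=> [_ [Hmin Huniq]] x0 hx0 hs.
set K1 := indic R K.
have hK1 : nonneg_vec K1 := @indic_nonneg R N K.
have key : forall z, feasible_Pplus A (A *m x0) z ->
   \sum_i x0 i 0 <= \sum_i z i 0 /\ (\sum_i z i 0 <= \sum_i x0 i 0 -> z = x0).
  move=> z [hAz hz].
  set v := z - x0.
  set S := \sum_i `|v i 0|.
  set t := (1 + S)^-1.
  have hS : 0 <= S by apply: sumr_ge0 => i _.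
  have hpos : 0 < 1 + S by lra.
  have tpos : 0 < t by rewrite invr_gt0.
  set w := K1 + t *: v.
  have hw : feasible_Pplus A (A *m K1) w.
    split; first by rewrite /w mulmxDr -scalemxAr /v mulmxBr hAz subrr scaler0 addr0.
    move=> i; rewrite /w !mxE; case: (boolP (i \in K)) => hi.
      have hvi : `|v i 0| <= S.
        rewrite /S (bigD1 i) //=; rewrite lerDl; by apply: sumr_ge0 => j _.
      have h1 : t * `|v i 0| <= 1.
        have -> : 1 = t * (1 + S) by rewrite mulVf // gt_eqF.
        apply: ler_wpM2l; first exact: ltW.
        apply: (le_trans hvi); rewrite -subr_ge0 addrK; exact: ler01.
      have h2 : - (t * v i 0) <= t * `|v i 0|.
        by have := ler_norm (- (t * v i 0)); rewrite normrN normrM gtr0_norm.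
      have -> : z i 0 - x0 i 0 = v i 0 by rewrite /v !mxE.
      move: h1 h2; clear; lra.
    have hx : x0 i 0 = 0.
      apply/eqP/negPn/negP => hne; move/negP: (hi); apply; apply: (subsetP hs); by rewrite in_set.
    rewrite /v ?mxE hx subr0 add0r; apply: mulr_ge0; [exact: ltW | exact: hz].
  have sumw : \sum_i w i 0 = \sum_i K1 i 0 + t * (\sum_i z i 0 - \sum_i x0 i 0).
    transitivity (\sum_i (K1 i 0 + t * (z i 0 - x0 i 0))).
      by apply: eq_bigr => i _; rewrite /w /v !mxE.
    by rewrite big_split /= -mulr_sumr sumrB.
  have hwn : nonneg_vec w by case: hw.
  split.
    have := Hmin w hw; rewrite !l1_nonneg // sumw => h.
    have : 0 <= t * (\sum_i z i 0 - \sum_i x0 i 0) by lra.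
    rewrite pmulr_rge0 //; lra.
  move=> hle.
  have hle2 : l1norm w <= l1norm K1.
    rewrite !l1_nonneg // sumw.
    have : t * (\sum_i z i 0 - \sum_i x0 i 0) <= 0.
      rewrite pmulr_rle0 //; lra.
    lra.
  have hwK := Huniq w hw hle2.
  have ht : t *: v = 0.
    by apply/(addrI K1); rewrite addr0.
  move/eqP: ht; rewrite scaler_eq0 => /orP [/eqP ht0 | /eqP hv].
    by rewrite ht0 ltxx in tpos.
  by apply/eqP; rewrite -subr_eq0; apply/eqP.
split; first by split.
split.
  move=> z hz; rewrite !l1_nonneg //; last by case: hz.
  by case: (key z hz).
move=> z hz; rewrite !l1_nonneg //; last by case: hz.
by case: (key z hz).
Qed.
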